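(* Let $\mathrm r\in\mathbb{Z}_+^d$ with $\mathrm r>0$, and let $x\in S_d$ have length $\mathrm n\in\mathbb{N}^d$; set $k_i=-\min_{0\le n\le n_i}x^{i,i}_n$ for $i\in[d]$ and $\mathrm k=(k_1,\dots,k_d)$. If $\mathrm n$ is the smallest solution of the system $(\mathrm r,x)$, then $\mathrm k$ is the smallest solution of the system $(\mathrm r,\bar x)$. Conversely, if $n_i=\tau^{(i)}_{k_i}$ for all $i\in[d]$ and $\mathrm k$ is the smallest solution of $(\mathrm r,\bar x)$, then $\mathrm n$ is the smallest solution of $(\mathrm r,x)$.
   Context: $d\ge2$, $[d]=\{1,\dots,d\}$, $\mathbb N=\{1,2,\dots\}$. $S_d$: families $x=(x^{(1)},\dots,x^{(d)})$, $x^{(i)}=(x^{i,1},\dots,x^{i,d})$ a $\mathbb{Z}^d$-valued sequence indexed by $\{0,\dots,n_i\}$ ($0\le n_i\le\infty$), with $x^{(i)}_0=0$, $x^{i,j}$ nondecreasing for $i\ne j$, and $x^{i,i}_{n+1}-x^{i,i}_n\ge -1$; $(n_1,\dots,n_d)$ is its length; $x^{i,j}(n):=x^{i,j}_n$. Order on vectors is coordinatewise; $\mathrm q<\mathrm q'$ means $\mathrm q\le\mathrm q'$, $\mathrm q\ne\mathrm q'$. For $x$ of length $\mathrm q$, a solution of the system $(\mathrm r,x)$ is $\mathrm s\in\mathbb{Z}_+^d$ with $\mathrm s\le\mathrm q$ and $r_j+\sum_{i=1}^dx^{i,j}(s_i)=0$ for all $j\in[d]$; the smallest solution is a solution that is $\le$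 every solution. For $x\in S_d$, with $k_i=-\inf_{0\le n\le n_i}x^{i,i}_n$, define $\tau^{(i)}_k=\min\{n\ge 0:x^{i,i}_n=-k\}$ for $0\le k\le k_i$, and $\bar x^{i,j}_k=x^{i,j}(\tau^{(i)}_k)$ for $0\le k\le k_i$, $i,j\in[d]$; $\bar x=(\bar x^{(1)},\dots,\bar x^{(d)})\in S_d$ has length $(k_1,\dots,k_d)$. *)

(* Defs.v *)
From mathcomp Require Import all_boot all_order all_algebra.
Set Implicit Arguments. Unset Strict Implicit. Unset Printing Implicit Defensive.
Import Order.TTheory GRing.Theory Num.Theory.
Local Open Scope ring_scope.

(* A family x = (x^(1),...,x^(d)): x i j m = x^{i,j}_m (indices in 'I_d,
   i.e. [d] shifted to {0..d-1}).  Values of x i j m for m > len i are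
   irrelevant. *)
Definition seqfam (d : nat) := 'I_d -> 'I_d -> nat -> int.

Definition in_Sd (d : nat) (x : seqfam d) (len : 'I_d -> nat) : Prop :=
  (forall i j, x i j 0%N = 0) /\
  (forall i j, i != j -> forall m, (m < len i)%N -> x i j m <= x i j m.+1) /\
  (forall i m, (m < len i)%N -> - 1 <= x i i m.+1 - x i i m).

Definition is_solution (d : nat) (r : 'I_d -> nat) (x : seqfam d)
    (q : 'I_d -> nat) (s : 'I_d -> nat) : Prop :=
  (forall i, (s i <= q i)%N) /\
  (forall j, (r j)%:Z + \sum_(i < d) x i j (s i) = 0).

Definition is_smallest_solution (d : nat) (r : 'I_d -> nat) (x : seqfam d)
    (q : 'I_d -> nat) (s : 'I_d -> nat) : Prop :=
  is_solution r x q s /\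
  (forall s', is_solution r x q s' -> forall i, (s i <= s' i)%N).

(* k_i = - min_{0 <= m <= len i} x^{i,i}_m  (as a natural number; the
   min is <= x^{i,i}_0 = 0 for x in S_d) *)
Definition kdepth (d : nat) (x : seqfam d) (len : 'I_d -> nat) (i : 'I_d) : nat :=
  absz (- \big[Num.min/0]_(m < (len i).+1) x i i m).

(* tau^{(i)}_k = min { m >= 0 : x^{i,i}_m = -k }, searched in [0, len i]
   (the hitting time exists there for 0 <= k <= k_i) *)
Definition tau (d : nat) (x : seqfam d) (len : 'I_d -> nat) (i : 'I_d) (k : nat) : nat :=
  find (fun m => x i i m == - (k%:Z)) (iota 0 (len i).+1).

Definition xbar (d : nat) (x : seqfam d) (len : 'I_d -> nat) : seqfam d :=
  fun i j k => x i j (tau x len i k).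

(* Main.v *)
Require Import Defs.
From mathcomp Require Import all_boot all_order all_algebra zify.
Import Order.TTheory GRing.Theory Num.Theory.
Local Open Scope ring_scope.
Set Implicit Arguments. Unset Strict Implicit.

Lemma walk_ivt (w : nat -> int) (N : nat) (hw0 : w 0%N = 0)
  (hst : forall m, (m < N)%N -> - 1 <= w m.+1 - w m) (m k : nat) :
  (m <= N)%N -> w m <= - (k%:Z) ->
  exists p, [/\ (p <= m)%N, w p = - (k%:Z) & forall q, (q < p)%N -> - (k%:Z) < w q].
Proof.
move=> hm hwm.
have ex : exists p, (p <= m)%N && (w p <= - (k%:Z)) by exists m; rewrite leqnn hwm.
case: (ex_minnP ex) => p /andP[hpm hwp] hmin.
have hq : forall q, (q < p)%N -> - (k%:Z) < w q.
  move=> q hq; rewrite ltNge; apply/negP => hle.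
  have := hmin q; rewrite hle andbT => /(_ (leq_trans (ltnW hq) hpm)); lia.
exists p; split => //.
case: p hpm hwp hmin hq => [|p] hpm hwp _ hq.
  rewrite hw0 in hwp *; lia.
have := hq p (ltnSn p); have := hst p (leq_trans hpm hm); lia.
Qed.

Lemma tau_char (w : nat -> int) (N p k : nat) :
  (p <= N)%N -> w p = - (k%:Z) -> (forall q, (q < p)%N -> w p < w q) ->
  find (fun m => w m == - (k%:Z)) (iota 0 N.+1) = p.
Proof.
move=> hpN hwp hlt.
set t := find _ _.
have hhas : has (fun m => w m == - (k%:Z)) (iota 0 N.+1).
  by apply/hasP; exists p; [rewrite mem_iota /= add0n ltnS | rewrite hwp].
have ht : (t < N.+1)%N by move: hhas; rewrite has_find size_iota.
have wt : w t = - (k%:Z).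
  by have := nth_find 0%N hhas; rewrite -/t nth_iota // add0n => /eqP.
case: (ltngtP t p) => // h.
  by have := hlt _ h; rewrite wt hwp ltxx.
by have := before_find 0%N h; rewrite nth_iota ?add0n ?hwp ?eqxx // ltnS.
Qed.

Lemma tau_hit (w : nat -> int) (N p k : nat) :
  (p <= N)%N -> w p = - (k%:Z) ->
  let t := find (fun m => w m == - (k%:Z)) (iota 0 N.+1) in
  (t <= N)%N /\ w t = - (k%:Z).
Proof.
move=> hpN hwp t.
have hhas : has (fun m => w m == - (k%:Z)) (iota 0 N.+1).
  by apply/hasP; exists p; [rewrite mem_iota /= add0n ltnS | rewrite hwp].
have ht : (t < N.+1)%N by move: hhas; rewrite has_find size_iota.
split => //.
by have := nth_find 0%N hhas; rewrite -/t nth_iota // add0n => /eqP.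
Qed.

Lemma bigmin_gen (N : nat) : forall (w : nat -> int),
  (\big[Num.min/0]_(m < N.+1) w m <= 0) /\
  (\big[Num.min/0]_(m < N.+1) w m = 0 \/
   exists p, (p <= N)%N /\ \big[Num.min/0]_(m < N.+1) w m = w p) /\
  (forall m, (m <= N)%N -> \big[Num.min/0]_(m < N.+1) w m <= w m).
Proof.
elim: N => [|N IH] w.
  rewrite big_ord_recl big_ord0 /=.
  rewrite minEle; case: ifP => hle.
    split=> //; split; first by right; exists 0%N.
    by move=> m; rewrite leqn0 => /eqP ->.
  split=> //; split; first by left.
  by move=> m; rewrite leqn0 => /eqP ->; move/negbT: hle; rewrite -ltNge => /ltW.
rewrite big_ord_recl /=.
have -> : \big[Num.min/0]_(i < N.+1) w (lift ord0 i) =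
          \big[Num.min/0]_(m < N.+1) w m.+1.
  by apply: eq_bigr => i _; rewrite lift0.
have [h1 [h2 h3]] := IH (fun m => w m.+1).
set M := \big[Num.min/0]_(m < N.+1) w m.+1 in h1 h2 h3 *.
rewrite minEle; case: ifP => hle.
  split; first exact: le_trans hle h1.
  split; first by right; exists 0%N.
  move=> [|m] hm //; exact: le_trans hle (h3 _ hm).
move/negbT: hle; rewrite -ltNge => hlt.
split=> //; split.
  case: h2 => [->|[p [hp ->]]]; first by left.
  by right; exists p.+1.
move=> [|m] hm; [exact: ltW | exact: h3].
Qed.

Lemma bigmin_prop (w : nat -> int) (hw0 : w 0%N = 0) (N : nat) :
  (exists p, (p <= N)%N /\ \big[Num.min/0]_(m < N.+1) w m = w p) /\
  (forall m, (m <= N)%N -> \big[Num.min/0]_(m < N.+1) w m <= w m).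
Proof.
have [h1 [h2 h3]] := bigmin_gen N w.
split=> //; case: h2 => [->|//]; by exists 0%N; rewrite hw0.
Qed.

Lemma kdepth_prop d (x : seqfam d) (n : 'I_d -> nat) (hx : in_Sd x n) i :
  (exists p, (p <= n i)%N /\ x i i p = - ((kdepth x n i)%:Z)) /\
  (forall m, (m <= n i)%N -> - ((kdepth x n i)%:Z) <= x i i m).
Proof.
case: hx => h0 _.
have [[p [hp ep]] hall] := bigmin_prop (h0 i i) (n i).
have hM : \big[Num.min/0]_(m < (n i).+1) x i i m <= 0.
  by have := hall 0%N isT; rewrite h0.
have hK : (kdepth x n i)%:Z = - \big[Num.min/0]_(m < (n i).+1) x i i m.
  rewrite /kdepth gez0_abs // oppr_ge0 //.
rewrite hK opprK; split; first by exists p.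
exact: hall.
Qed.

Definition Fr d (r : 'I_d -> nat) (x : seqfam d) (s : 'I_d -> nat) (j : 'I_d) : int :=
  (r j)%:Z + \sum_(i < d) x i j (s i).

Lemma offdiag_mono d (x : seqfam d) n (hx : in_Sd x n) i j : i != j ->
  forall a b, (a <= b)%N -> (b <= n i)%N -> x i j a <= x i j b.
Proof.
case: hx => _ [hm _] hij a b; elim: b => [|b IH].
  by rewrite leqn0 => /eqP ->.
rewrite leq_eqVlt => /orP[/eqP -> //|hab] hb.
exact: le_trans (IH hab (ltnW hb)) (hm _ _ hij _ hb).
Qed.

Lemma offdiag_ge0 d (x : seqfam d) n (hx : in_Sd x n) i j : i != j ->
  forall a, (a <= n i)%N -> 0 <= x i j a.
Proof.
move=> hij a ha; have := offdiag_mono hx hij (leq0n a) ha.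
by case: hx => h0 _; rewrite h0.
Qed.

Lemma sum_upd d (f : 'I_d -> nat -> int) (s : 'I_d -> nat) j0 p :
  \sum_(i < d) f i (if i == j0 then p else s i) =
  \sum_(i < d) f i (s i) - f j0 (s j0) + f j0 p.
Proof.
rewrite (bigD1 j0) //= [in RHS](bigD1 j0) //= eqxx.
rewrite (eq_bigr (fun i => f i (s i))) => [|i /negbTE ->] //.
lia.
Qed.

Lemma sumn_upd d (s : 'I_d -> nat) j0 p : (p < s j0)%N ->
  (\sum_(i < d) (if i == j0 then p else s i) < \sum_(i < d) s i)%N.
Proof.
move=> hp.
rewrite (bigD1 j0) //= [in X in (_ < X)%N](bigD1 j0) //= eqxx.
rewrite (eq_bigr (fun i => s i)) => [|i /negbTE ->] //.
by rewrite ltn_add2r.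
Qed.

Lemma le_sumn d (s : 'I_d -> nat) j : (s j <= \sum_(i < d) s i)%N.
Proof. by rewrite (bigD1 j) //= leq_addr. Qed.

Lemma good_case d r (x : seqfam d) n (hx : in_Sd x n) s :
  (forall i, (s i <= n i)%N) -> (forall j, Fr r x s j <= 0) ->
  (forall j q, (q < s j)%N -> x j j (s j) - Fr r x s j < x j j q) ->
  (forall j, Fr r x s j = 0) /\ (forall j q, (q < s j)%N -> x j j (s j) < x j j q).
Proof.
move=> hsn hF hg.
have hF0 : forall j, Fr r x s j = 0.
  move=> j; have := hF j; have hsj := hsn j; have hgj := hg j.
  case E: (s j) hsj hgj => [|q] hsj hgj hFj.
    have : 0 <= \sum_(i < d) x i j (s i).
      apply: sumr_ge0 => i _; case: (eqVneq i j) => [->|hij].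
        by rewrite E; case: hx => h0 _; rewrite h0.
      exact: (offdiag_ge0 hx hij (hsn i)).
    rewrite /Fr in hFj *; move=> hs; lia.
  have := hgj q (ltnSn q).
  case: hx => _ [_ hst]; have := hst j q hsj; lia.
split=> // j q hq; have := hg j q hq; by rewrite hF0 subr0.
Qed.

Lemma good d r (x : seqfam d) n (hx : in_Sd x n) N : forall s,
  (\sum_(i < d) s i <= N)%N -> (forall i, (s i <= n i)%N) ->
  (forall j, Fr r x s j <= 0) ->
  exists m : 'I_d -> nat, [/\ forall i, (m i <= s i)%N,
    forall j, Fr r x m j = 0 &
    forall j q, (q < m j)%N -> x j j (m j) < x j j q].
Proof.
elim: N => [|N IH] s hsum hsn hF;
  have [bad|gd] := boolP [exists j : 'I_d, [exists q : 'I_(s j),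
      x j j q <= x j j (s j) - Fr r x s j]].
- have /existsP[j /existsP[q _]] := bad.
  have := leq_trans (le_sumn s j) hsum; have := ltn_ord q; lia.
- exists s.
  have H : forall j q, (q < s j)%N -> x j j (s j) - Fr r x s j < x j j q.
    move=> j q hq; move/existsPn: gd => /(_ j) /existsPn /(_ (Ordinal hq)).
    by rewrite -ltNge.
  by have [h1 h2] := good_case hx hsn hF H; split.
- have /existsP[j /existsP[q hq]] := bad.
  pose s' := fun i => if i == j then (q : nat) else s i.
  have [|||m [hm1 hm2 hm3]] := IH s'.
  + rewrite -ltnS; exact: leq_trans (sumn_upd (ltn_ord q)) hsum.
  + move=> i; rewrite /s'; case: eqP => [->|_] //.
    exact: ltnW (leq_trans (ltn_ord q) (hsn j)).
  + move=> i; rewrite /Fr /s' (sum_upd (fun a b => x a i b)).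
    case: (eqVneq i j) => [->|hij].
      have := hF j; rewrite /Fr in hq *; lia.
    have hji : j != i by rewrite eq_sym.
    have := offdiag_mono hx hji (ltnW (ltn_ord q)) (hsn j).
    have := hF i; rewrite /Fr; lia.
  exists m; split => // i; apply: leq_trans (hm1 i) _.
  rewrite /s'; case: eqP => [->|_] //; exact: ltnW.
- exists s.
  have H : forall j q, (q < s j)%N -> x j j (s j) - Fr r x s j < x j j q.
    move=> j q hq; move/existsPn: gd => /(_ j) /existsPn /(_ (Ordinal hq)).
    by rewrite -ltNge.
  by have [h1 h2] := good_case hx hsn hF H; split.
Qed.

Unset Implicit Arguments.

Theorem lemma2p6 (d : nat) (hd : (2 <= d)%N) (r : 'I_d -> nat)
    (hr : exists i, r i != 0%N)
    (x : seqfam d) (n : 'I_d -> nat) (hn : forall i, (0 < n i)%N)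
    (hx : in_Sd x n) :
  (is_smallest_solution r x n n ->
     is_smallest_solution r (xbar x n) (kdepth x n) (kdepth x n)) /\
  ((forall i, n i = tau x n i (kdepth x n i)) ->
     is_smallest_solution r (xbar x n) (kdepth x n) (kdepth x n) ->
     is_smallest_solution r x n n).
Proof.
have hx' := hx; case: hx' => h0 [hmono hst].
split.
- move=> [[_ hnsol] hnmin].
  have [m [hmle hmsol hmhp]] :=
    @good d r x n hx _ n (leqnn _) (fun i => leqnn (n i))
      (fun j => ltac:(by rewrite /Fr hnsol)).
  have hnm : forall i, n i = m i.
    move=> i; apply/eqP; rewrite eqn_leq hmle andbT.
    exact: (hnmin m (conj (fun i => hmle i) hmsol) i).
  have hHP : forall j q, (q < n j)%N -> x j j (n j) < x j j q.
    by move=> j q; rewrite !hnm; exact: hmhp.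
  have hwn : forall i, x i i (n i) = - (kdepth x n i)%:Z.
    move=> i; have [[p [hp ep]] hall] := kdepth_prop hx i.
    case: (ltngtP p (n i)) hp => [hlt|hgt|<-] hp //.
      by have := hHP i p hlt; have := hall (n i) (leqnn _); rewrite ep; lia.
  have htau : forall i, tau x n i (kdepth x n i) = n i.
    move=> i; rewrite /tau; apply: tau_char => //; exact: hHP.
  split.
  + split => // j.
    rewrite (eq_bigr (fun i => x i j (n i))) => [|i _]; first exact: hnsol.
    by rewrite /xbar htau.
  + move=> s' [hs'le hs'sol] i.
    have hu : forall i0, (tau x n i0 (s' i0) <= n i0)%N /\
        (tau x n i0 (s' i0) = n i0 -> s' i0 = kdepth x n i0).
      move=> i0.
      have hl : x i0 i0 (n i0) <= - (s' i0)%:Z.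
        by rewrite hwn; have := hs'le i0; lia.
      have [p [hpn hwp hq]] := @walk_ivt _ _ (h0 i0 i0) (hst i0) (n i0) (s' i0) (leqnn (n i0)) hl.
      have ht : tau x n i0 (s' i0) = p.
        rewrite /tau; apply: tau_char => //.
        by move=> q hq'; rewrite hwp; exact: hq.
      rewrite ht; split => // hpe.
      by move: hwp; rewrite hpe hwn; lia.
    have hle := hnmin (fun i => tau x n i (s' i))
      (conj (fun i => (hu i).1) hs'sol) i.
    have [h1 h2] := hu i.
    have e : tau x n i (s' i) = n i by apply/eqP; rewrite eqn_leq h1 hle.
    by rewrite (h2 e).
- move=> hntau [[_ hKsol] hKmin].
  have hwn : forall i, x i i (n i) = - (kdepth x n i)%:Z.
    move=> i; have [[p [hp ep]] _] := kdepth_prop hx i.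
    have [_ ht] := tau_hit hp ep.
    rewrite {1}hntau; exact: ht.
  have hnsol : forall j, (r j)%:Z + \sum_(i < d) x i j (n i) = 0.
    move=> j; rewrite -[RHS](hKsol j); congr (_ + _).
    by apply: eq_bigr => i _; rewrite /xbar -hntau.
  split; first by split.
  move=> s' [hs'le hs'sol] i.
  have [m [hmle hmsol hmhp]] :=
    @good d r x n hx _ s' (leqnn _) hs'le
      (fun j => ltac:(by rewrite /Fr hs'sol)).
  have hmn : forall j, (m j <= n j)%N := fun j => leq_trans (hmle j) (hs'le j).
  have hneg : forall j, x j j (m j) <= 0.
    move=> j; have := hmhp j 0%N; case: (m j) => [|mj] hh.
      by rewrite h0.
    by have := hh isT; rewrite h0 => /ltW.
  have hh : forall j, x j j (m j) = - (absz (- x j j (m j)))%:Z.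
    by move=> j; rewrite abszE ger0_norm ?opprK // oppr_ge0.
  have htm : forall j, tau x n j (absz (- x j j (m j))) = m j.
    move=> j; rewrite /tau; apply: tau_char; [exact: hmn | exact: hh | exact: hmhp].
  have hhK : forall j, (absz (- x j j (m j)) <= kdepth x n j)%N.
    move=> j; have [_ hall] := kdepth_prop hx j.
    have := hall _ (hmn j); have := hh j; lia.
  have hmsol' : forall j, (r j)%:Z +
      \sum_(i < d) xbar x n i j (absz (- x i i (m i))) = 0.
    move=> j; rewrite -[RHS](hmsol j) /Fr; congr (_ + _).
    by apply: eq_bigr => i0 _; rewrite /xbar htm.
  have hKh := hKmin (fun j => absz (- x j j (m j))) (conj hhK hmsol') i.
  have e : absz (- x i i (m i)) = kdepth x n i.
    by apply/eqP; rewrite eqn_leq hhK hKh.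
  by rewrite hntau -e htm.
Qed.
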